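(* Let $p$ be a prime, $r\in\mathbb{N}$, and $M\in\mathrm{Mat}(d,\mathbb{Z})$ acting by $x\mapsto Mx \bmod p^r$ on $\tilde L_{p^r}=(\mathbb{Z}/p^r\mathbb{Z})^d$. Suppose $|\ker(M)|=p$. Then $|\ker(M^i)|=p^{\min(i,m)}$ for all $i\ge0$, where $m$ is the smallest integer $m\ge 0$ for which there exists $k\ge 1$ with $M^{k+m}\equiv M^m\pmod{p^r}$ (equivalently, the maximal pretail length). Consequently $v_i=p^{i-1}(p-1)$ for $1\le i\le m$, and all maximal pretails of $0$ have the same length $m$.
   Context: $\ker(M^j)=\{x\in\tilde L_{p^r}: M^jx\equiv0\}$. A point $y$ is periodic if $M^ky\equiv y$ for some $k\ge1$; a pretail of $y$ is a set $\{x,Mx,\dots,M^jx=y\}$ in which $y$ is the only periodic point, of length $j$; it is maximal if not contained in a longer pretail of $y$. The pretail tree of $0$ is the rooted tree (root $0$) formed by all pretails of $0$, with $x\neq0$ a child of $Mx$; $v_i$ is the number of its vertices at graph distance $i$ from the root. *)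

(* Defs.v *)
From HB Require Import structures.
From mathcomp Require Import all_boot all_order all_algebra.
Set Implicit Arguments. Unset Strict Implicit. Unset Printing Implicit Defensive.
Import GRing.Theory.
Local Open Scope ring_scope.

Definition modmx (n d : nat) (A : 'M[int]_d) : 'M['Z_n]_d :=
  map_mx (fun z : int => z%:~R) A.

Definition congr_mx (n d : nat) (A B : 'M[int]_d) : Prop :=
  modmx n A = modmx n B.

Definition act (n d : nat) (M : 'M[int]_d) (x : 'cV['Z_n]_d) : 'cV['Z_n]_d :=
  modmx n M *m x.

Definition kerM (n d : nat) (M : 'M[int]_d) (j : nat) : {set 'cV['Z_n]_d} :=
  [set x | modmx n (M ^+ j) *m x == 0].

Definition preperiod_cond (n d : nat) (M : 'M[int]_d) (m : nat) : Prop :=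
  exists k : nat, (0 < k)%N /\ congr_mx n (M ^+ (k + m)) (M ^+ m).
Definition is_min_preperiod (n d : nat) (M : 'M[int]_d) (m : nat) : Prop :=
  preperiod_cond n M m /\ forall m', preperiod_cond n M m' -> (m <= m')%N.

Definition periodic (T : Type) (f : T -> T) (y : T) : Prop :=
  exists k : nat, (0 < k)%N /\ iter k f y = y.

Definition is_pretail (T : eqType) (f : T -> T) (y x : T) (j : nat) : Prop :=
  [/\ iter j f x = y, uniq (traject f x j.+1)
    & forall z, z \in traject f x j.+1 -> periodic f z -> z = y].

Definition maximal_pretail (T : eqType) (f : T -> T) (y x : T) (j : nat) : Prop :=
  is_pretail f y x j /\
  ~ (exists x' j', [/\ is_pretail f y x' j', (j < j')%N
                     & {subset traject f x j.+1 <= traject f x' j'.+1}]).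

Definition pretail_tree_vertex (T : eqType) (f : T -> T) (root z : T) : Prop :=
  exists x j, is_pretail f root x j /\ z \in traject f x j.+1.

(* z is a vertex of the pretail tree at graph distance i from the root: the
   path from z to the root follows parents z -> f z -> f (f z) -> ... *)
Definition tree_at_dist (T : eqType) (f : T -> T) (root z : T) (i : nat) : Prop :=
  [/\ pretail_tree_vertex f root z, iter i f z = root
    & forall j, (j < i)%N -> iter j f z <> root].

(* Main.v *)
Require Import Defs.
From HB Require Import structures.
From mathcomp Require Import all_boot all_order all_algebra.
From mathcomp Require Import fingroup morphism quotient.
Set Implicit Arguments. Unset Strict Implicit. Unset Printing Implicit Defensive.
Import GRing.Theory.
Local Open Scope ring_scope.

Definition lmul (R : finComNzRingType) (d : nat) (B : 'M[R]_d) (x : 'cV[R]_d) : 'cV[R]_d := B *m x.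
Lemma lmulM (R : finComNzRingType) (d : nat) (B : 'M[R]_d) :
  {in [set: 'cV[R]_d] &, {morph lmul B : x y / (x * y)%g}}.
Proof. by move=> x y _ _; rewrite /lmul !FinRing.zmodMgE mulmxDr. Qed.
Definition lmulm (R : finComNzRingType) (d : nat) (B : 'M[R]_d) := Morphism (lmulM B).

Definition Kset (R : finComNzRingType) (d : nat) (A : 'M[R]_d) (i : nat) : {set 'cV[R]_d} :=
  [set x | A ^+ i *m x == 0].

Lemma KsetE (R : finComNzRingType) (d : nat) (A : 'M[R]_d) i :
  Kset A i = ('ker (lmulm (A ^+ i)))%g.
Proof. by apply/setP => x; rewrite !inE /= /lmul. Qed.

Lemma Kmono (R : finComNzRingType) (d : nat) (A : 'M[R]_d) i j :
  (i <= j)%N -> Kset A i \subset Kset A j.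
Proof.
move=> le; apply/subsetP => x; rewrite !inE => /eqP h.
by rewrite -(subnK le) exprD -mulmxA h mulmx0.
Qed.

Lemma card_img (R : finComNzRingType) (d : nat) (A : 'M[R]_d) a b :
  (a <= b)%N ->
  (#|(lmulm (A ^+ a) @* Kset A b)%g| * #|Kset A a|)%N = #|Kset A b|.
Proof.
move=> le; rewrite KsetE card_morphim setTI -(LagrangeI ('ker (lmulm (A ^+ b)))%G ('ker (lmulm (A ^+ a)))%G).
rewrite mulnC; congr (_ * _)%N. idtac.
rewrite /= -!KsetE (setIidPr (Kmono A le)) //.
Qed.

Lemma img_sub (R : finComNzRingType) (d : nat) (A : 'M[R]_d) a b :
  (a <= b)%N -> (lmulm (A ^+ a) @* Kset A b)%g \subset Kset A (b - a).
Proof.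
move=> le; apply/subsetP => y /morphimP [x _ xK ->].
move: xK; by rewrite !inE /= /lmul mulmxA mulmxE -exprD subnK.
Qed.

Lemma K0 (R : finComNzRingType) (d : nat) (A : 'M[R]_d) : #|Kset A 0| = 1%N.
Proof.
have -> : Kset A 0 = [set 0]; last exact: cards1.
by apply/setP => x; rewrite !inE expr0 mul1mx.
Qed.

Lemma L_step (R : finComNzRingType) (d : nat) (A : 'M[R]_d) p i :
  prime p -> #|Kset A 1| = p ->
  #|Kset A i.+1| = #|Kset A i| \/ #|Kset A i.+1| = (p * #|Kset A i|)%N.
Proof.
move=> pp h1; have := card_img A (leqnSn i).
have sub := img_sub A (leqnSn i); rewrite subSnn in sub.
have : (#|(lmulm (A ^+ i) @* Kset A i.+1)%g| %| p)%N.
  by rewrite -h1; move: sub; rewrite !KsetE => sub; apply: cardSg.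
case/primeP: pp => _ hp /hp /orP [] /eqP -> <-; [left; rewrite mul1n | right] => //.
Qed.

Lemma L_stab (R : finComNzRingType) (d : nat) (A : 'M[R]_d) s t :
  Kset A s = Kset A s.+1 -> (s <= t)%N -> Kset A t = Kset A s.
Proof.
move=> hs; elim: t => [|t IH] le.
  by move: le; rewrite leqn0 => /eqP ->.
case: (ltngtP s t.+1) le => // [lt _ | -> //].
have le' : (s <= t)%N by [].
rewrite -IH //; apply/eqP; rewrite eqEsubset (Kmono _ (leqnSn t)) andbT.
apply/subsetP => x; rewrite !inE => h.
have : A ^+ (t - s) *m x \in Kset A s.+1.
  by rewrite inE mulmxA mulmxE -exprD addSn (subnKC le').
by rewrite -hs inE mulmxA mulmxE -exprD (subnKC le').
Qed.

Lemma L_Kle (R : finComNzRingType) (d : nat) (A : 'M[R]_d) s t :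
  Kset A s = Kset A s.+1 -> Kset A t \subset Kset A s.
Proof.
move=> hs; case: (leqP s t) => le; first by rewrite (L_stab hs le).
exact: Kmono (ltnW le).
Qed.

Lemma Kex (R : finComNzRingType) (d : nat) (A : 'M[R]_d) :
  exists s, Kset A s == Kset A s.+1.
Proof.
set N := #|'cV[R]_d|.
have [s Ps | none] := pickP (fun s : 'I_N.+1 => Kset A s == Kset A s.+1).
  by exists s.
have gr : forall s, (s <= N)%N -> (s < #|Kset A s|)%N.
  elim=> [|s IH] le; first by rewrite K0.
  apply: leq_ltn_trans (IH (ltnW le)) _; apply: proper_card; rewrite properEneq (Kmono _ (leqnSn s)) andbT.
  by have /= -> := none (Ordinal (leqW le)).
by have := gr N (leqnn N); rewrite ltnNge max_card.
Qed.

Lemma L_card (R : finComNzRingType) (d : nat) (A : 'M[R]_d) p s :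
  prime p -> #|Kset A 1| = p ->
  Kset A s = Kset A s.+1 -> (forall n, Kset A n = Kset A n.+1 -> (s <= n)%N) ->
  forall i, #|Kset A i| = (p ^ minn i s)%N.
Proof.
move=> pp h1 hs hmin; elim=> [|i IH]; first by rewrite K0 min0n.
case: (ltnP i s) => lis.
  rewrite (minn_idPl (ltnW lis)) (minn_idPl lis) in IH *.
  case: (L_step i pp h1) => e; last by rewrite e IH expnS.
  have : Kset A i == Kset A i.+1 by rewrite eqEcard (Kmono _ (leqnSn i)) e leqnn.
  by move/eqP/hmin; rewrite leqNgt lis.
rewrite (minn_idPr lis) (minn_idPr (leqW lis)) in IH *.
by rewrite (L_stab hs (leqW lis)) -(L_stab hs lis).
Qed.

Lemma mexpA (R : finComNzRingType) (d : nat) (A : 'M[R]_d) i j (x : 'cV[R]_d) :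
  A ^+ i *m (A ^+ j *m x) = A ^+ (i + j) *m x.
Proof. by rewrite mulmxA mulmxE -exprD. Qed.

Lemma L_pre_a (R : finComNzRingType) (d : nat) (A : 'M[R]_d) k m :
  (0 < k)%N -> A ^+ (k + m) = A ^+ m -> Kset A m = Kset A m.+1.
Proof.
move=> k0 e; apply/eqP; rewrite eqEsubset (Kmono _ (leqnSn m)) /=.
apply/subsetP => x; rewrite !inE => /eqP h.
by rewrite -e -(subnK k0) -addnA add1n -mexpA h mulmx0.
Qed.

Lemma mx_colP (R : finComNzRingType) (d : nat) (B C : 'M[R]_d) :
  (forall v : 'cV[R]_d, B *m v = C *m v) -> B = C.
Proof.
move=> H; apply/matrixP => i j; have := H (delta_mx j 0); rewrite -!colE.
by move/(congr1 (fun v : 'cV[R]_d => v i 0)); rewrite !mxE.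
Qed.

Lemma L_pre_b (R : finComNzRingType) (d : nat) (A : 'M[R]_d) s :
  Kset A s = Kset A s.+1 -> exists k, (0 < k)%N /\ A ^+ (k + s) = A ^+ s.
Proof.
move=> hs.
set N := #|{: 'M[R]_d}|.
have : ~~ injectiveb (fun i : 'I_N.+1 => A ^+ i).
  by apply/negP => /injectiveP /leq_card; rewrite card_ord ltnn.
case/injectivePn => a [b nab eab].
have [a' [b' [lab eab']]] : exists a' b', (a' < b')%N /\ A ^+ a' = A ^+ b'.
  case: (ltngtP a b) => [lt | lt | e]; first by exists a, b.
    by exists b, a.
  by move: nab; rewrite -val_eqE /= e eqxx.
exists (b' - a')%N; split; first by rewrite subn_gt0.
apply: mx_colP => v.
set u := A ^+ (b' - a')%N *m v - v.
have wE : A ^+ s *m u = A ^+ (b' - a' + s)%N *m v - A ^+ s *m v.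
  by rewrite /u mulmxBr mexpA addnC.
have wK : A ^+ s *m u \in Kset A a'.
  rewrite inE mexpA mulmxBr mexpA addnAC (subnKC (ltnW lab)).
  by rewrite exprD -eab' -exprD subrr.
have uK : u \in Kset A s.
  by rewrite -(L_stab hs (leq_addr s s)) inE -mexpA; have := subsetP (L_Kle a' hs) _ wK; rewrite inE.
by apply/eqP; rewrite -subr_eq0 -wE; move: uK; rewrite inE.
Qed.


Lemma iterE (R : finComNzRingType) (d : nat) (A : 'M[R]_d) j x :
  iter j (lmul A) x = A ^+ j *m x.
Proof.
elim: j => [|j IH] /=; first by rewrite expr0 mul1mx.
by rewrite IH /lmul mulmxA mulmxE -exprS.
Qed.

Lemma pretail_of (R : finComNzRingType) (d : nat) (A : 'M[R]_d) z i :
  A ^+ i *m z = 0 -> (forall j, (j < i)%N -> A ^+ j *m z != 0) ->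
  is_pretail (lmul A) 0 z i.
Proof.
move=> hi hj; split; first by rewrite iterE.
  rewrite looping_uniq; apply/negP => /trajectP [j lt].
  by rewrite !iterE hi => e; move: (hj j lt); rewrite -e eqxx.
move=> z' /trajectP [j lt ->] [k [k0 per]].
rewrite !iterE in per *; set w := A ^+ j *m z in per *.
have pn : forall n, A ^+ (k * n) *m w = w.
  elim=> [|n IH]; first by rewrite muln0 expr0 mul1mx.
  by rewrite mulnS -mexpA IH per.
rewrite -(pn i) -(@subnK (i - j) (k * i)); last first.
  by apply: leq_trans (leq_subr j i) (leq_pmull i k0).
rewrite -mexpA /w (mexpA _ (i - j)) subnK; last by rewrite -ltnS. by rewrite hi mulmx0.
Qed.
Lemma modmxX n d (M : 'M[int]_d) j : modmx n (M ^+ j) = (modmx n M) ^+ j.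
Proof.
elim: j => [|j IH]; first by rewrite !expr0 /modmx map_mx1.
by rewrite !exprS -!mulmxE -IH /modmx map_mxM.
Qed.

Unset Implicit Arguments. Set Strict Implicit. Set Printing Implicit Defensive.

Theorem proposition3p5 (p r d : nat) (M : 'M[int]_d) :
  prime p -> (0 < r)%N ->
  #|kerM (p ^ r) M 1| = p ->
  forall m : nat, is_min_preperiod (p ^ r) M m ->
  [/\ forall i : nat, #|kerM (p ^ r) M i| = (p ^ minn i m)%N,
      forall i : nat, (1 <= i <= m)%N ->
        exists S : {set 'cV['Z_(p ^ r)]_d},
          (forall z, z \in S <-> tree_at_dist (@act (p ^ r) d M) 0 z i) /\
          #|S| = (p ^ i.-1 * p.-1)%N
    & forall (x : 'cV['Z_(p ^ r)]_d) (j : nat),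
        maximal_pretail (@act (p ^ r) d M) 0 x j -> j = m].
Proof.
move=> pp r0 h1 m [[k [k0 pc]] mmin].
set A := modmx (p ^ r) M.
have kE : forall j, kerM (p ^ r) M j = Kset A j by move=> j; rewrite /kerM modmxX.
have h1' : #|Kset A 1| = p by rewrite -kE.
case: (ex_minnP (Kex A)) => s /eqP hs hmin'.
have hmin : forall n, Kset A n = Kset A n.+1 -> (s <= n)%N.
  by move=> n e; apply: hmin'; rewrite e.
have ms : m = s.
  apply/eqP; rewrite eqn_leq; apply/andP; split.
    apply: mmin; have [k' [k'0 e]] := L_pre_b hs.
    by exists k'; split=> //; rewrite /congr_mx !modmxX -/A e.
  apply: hmin; apply: (L_pre_a k0); move: pc; rewrite /congr_mx !modmxX.
  done.
subst m.
have card := L_card pp h1' hs hmin.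
have p1 : (1 < p)%N by apply: prime_gt1.
have s0 : (0 < s)%N.
  rewrite lt0n; apply/eqP => s0; move: hs; rewrite s0 => e.
  by move: h1'; rewrite -e K0 => e1; move: p1; rewrite -e1.
have actE : @act (p ^ r) d M = lmul A by [].
rewrite actE.
split.
- by move=> i; rewrite kE card.
- move=> i /andP [i1 im]; exists (Kset A i :\: Kset A i.-1); split.
    move=> z; rewrite !inE; split.
      case/andP => nz zi.
      have hj : forall j, (j < i)%N -> A ^+ j *m z != 0.
        move=> j lt; apply: contra nz => hz.
        have le : (j <= i.-1)%N by rewrite -ltnS prednK.
        by have := subsetP (Kmono A le) z; rewrite !inE; apply.
      split.
      + exists z, i; split; first exact: pretail_of (eqP zi) hj.
        by rewrite trajectS mem_head.
      + by rewrite iterE; apply/eqP.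
      + by move=> j lt; rewrite iterE; apply/eqP; apply: hj.
    case=> _ hi hlt; rewrite iterE in hi; rewrite hi eqxx andbT.
    apply/eqP => e; apply: (hlt i.-1); first by rewrite ltn_predL.
    by rewrite iterE.
  rewrite cardsD (setIidPr (Kmono A (leq_pred i))) !card.
  rewrite (minn_idPl im) (minn_idPl (leq_trans (leq_pred i) im)).
  rewrite -{1}(prednK i1) expnS -{2}(mul1n (p ^ i.-1)%N) -mulnBl subn1 mulnC //.
- move=> x j [[pj puniq pper] nmax].
  rewrite iterE in pj.
  have hj : forall t, (t < j)%N -> A ^+ t *m x != 0.
    move=> t lt; apply/negP => /eqP e; move: puniq; rewrite looping_uniq /looping.
    by rewrite iterE pj -e; apply/negP; rewrite negbK; apply/trajectP; exists t => //; rewrite iterE.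
  apply/eqP; rewrite eqn_leq; apply/andP; split.
    rewrite leqNgt; apply/negP => sj.
    have j0 : (0 < j)%N by apply: leq_ltn_trans sj.
    have : x \in Kset A j.-1.
      have sj1 : (s <= j.-1)%N by rewrite -ltnS prednK.
      by rewrite (L_stab hs sj1) -(L_stab hs (ltnW sj)) inE pj.
    by rewrite inE; apply/negP; apply: hj; rewrite ltn_predL.
  rewrite leqNgt; apply/negP => js; apply: nmax.
  have [y [yK yx hy]] : exists y, [/\ A ^+ j.+1 *m y = 0, A *m y = x
        & forall t, (t < j.+1)%N -> A ^+ t *m y != 0].
    case: (posnP j) => [j0|j0].
      have : Kset A 0 \proper Kset A 1.
        rewrite properEneq (Kmono _ (leqnSn 0)) andbT.
        by apply/negP => /eqP /hmin; rewrite leqNgt s0.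
      case/properP => _ [y yK1 yK0]; exists y; split.
      + by apply/eqP; rewrite j0; rewrite inE in yK1.
      + by rewrite j0 expr0 mul1mx in pj; rewrite pj; apply/eqP; rewrite inE expr1 in yK1.
      + by rewrite j0; case=> // _; rewrite inE in yK0.
    have eqI : (lmulm (A ^+ 1) @* Kset A j.+1)%g = Kset A j.
      apply/eqP; rewrite eqEcard.
      have := img_sub A (isT : (1 <= j.+1)%N); rewrite subn1 /= => -> /=.
      have := card_img A (isT : (1 <= j.+1)%N).
      rewrite !card (minn_idPl js) (minn_idPl (ltnW js)).
      rewrite (minn_idPl s0) expn1 expnS mulnC.
      by move/eqP; rewrite eqn_mul2l (gtn_eqF (prime_gt0 pp)) /= => /eqP ->.
    have : x \in Kset A j by rewrite inE pj.
    rewrite -eqI => /morphimP [y _ yK xE].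
    have yx : A *m y = x by rewrite xE /= /lmul expr1.
    exists y; split => //.
    + by apply/eqP; rewrite inE in yK.
    + case=> [_|t lt].
        rewrite expr0 mul1mx; apply/negP => /eqP y0.
        by move: (hj 0%N j0); rewrite expr0 mul1mx -yx y0 mulmx0 eqxx.
      by rewrite exprSr -mulmxE -mulmxA yx; apply: hj.
  exists y, j.+1; split => //.
    by apply: pretail_of.
  move=> z zin; rewrite trajectS inE; apply/orP; right.
  by rewrite /= /lmul yx.
Qed.
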